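(* Let $p,q,p',q'\in\mathbb{R}^3$ satisfy $p^\mu+q^\mu=p'^\mu+q'^\mu$. If $\bar g<1$, then $q'^0\approx q^0$ and $p'^0\approx p^0$ with absolute implicit constants. In particular, if $2^{-k-1}\le\bar g\le 2^{-k}$ for some integer $k>0$, then $p^0\le\sqrt5\,p'^0$ and $p'^0\le\sqrt5\,p^0$.
   Context: For $p\in\mathbb{R}^3$, $p^0=\sqrt{1+|p|^2}$, $p^\mu=(p^0,p)$, $p^\mu q_\mu=-p^0q^0+p\cdot q$, and $\bar g=g(p'^\mu,p^\mu)=\sqrt{2(-p'^\mu p_\mu-1)}$. *)

(* Defs.v *)
From HB Require Import structures.
From mathcomp Require Import all_boot all_order all_algebra.
From mathcomp Require Import reals.
Set Implicit Arguments. Unset Strict Implicit. Unset Printing Implicit Defensive.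
Import Order.TTheory GRing.Theory Num.Theory.
Local Open Scope ring_scope.

Section Defs.
Variable R : realType.

Definition dot3 (p q : 'rV[R]_3) : R := \sum_(i < 3) p 0 i * q 0 i.

(* p^0 = sqrt(1 + |p|^2) *)
Definition energy (p : 'rV[R]_3) : R := Num.sqrt (1 + dot3 p p).

Definition mink (p q : 'rV[R]_3) : R := - energy p * energy q + dot3 p q.

(* gbar = g(p'^mu, p^mu) = sqrt(2 (- p'^mu p_mu - 1)) *)
Definition gbar (p' p : 'rV[R]_3) : R := Num.sqrt (2 * (- mink p' p - 1)).

Definition conserved (p q p' q' : 'rV[R]_3) : Prop :=
  energy p + energy q = energy p' + energy q' /\ p + q = p' + q'.
End Defs.

(* Main.v *)
Require Import Defs.
From HB Require Import structures.
From mathcomp Require Import all_boot all_order all_algebra.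
From mathcomp Require Import reals.
From mathcomp Require Import ring lra.
Import Order.TTheory GRing.Theory Num.Theory.
Local Open Scope ring_scope.
Set Implicit Arguments. Unset Strict Implicit.

Section Aux.
Variable R : realType.
Implicit Types p q r : 'rV[R]_3.

Lemma dotC p q : dot3 p q = dot3 q p.
Proof. by rewrite /dot3; apply: eq_bigr => i _; rewrite mulrC. Qed.

Lemma dotDl p q r : dot3 (p + q) r = dot3 p r + dot3 q r.
Proof. by rewrite /dot3 -big_split; apply: eq_bigr => i _; rewrite mxE mulrDl. Qed.

Lemma dotNl p r : dot3 (- p) r = - dot3 p r.
Proof. by rewrite /dot3 -sumrN; apply: eq_bigr => i _; rewrite mxE mulNr. Qed.

Lemma dotBl p q r : dot3 (p - q) r = dot3 p r - dot3 q r.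
Proof. by rewrite dotDl dotNl. Qed.

Lemma dotDr p q r : dot3 r (p + q) = dot3 r p + dot3 r q.
Proof. by rewrite dotC dotDl !(dotC r). Qed.

Lemma dotNr p r : dot3 r (- p) = - dot3 r p.
Proof. by rewrite dotC dotNl dotC. Qed.

Lemma dotBr p q r : dot3 r (p - q) = dot3 r p - dot3 r q.
Proof. by rewrite dotC dotBl !(dotC r). Qed.

Lemma dot_ge0 p : 0 <= dot3 p p.
Proof. by rewrite /dot3; apply: sumr_ge0 => i _; rewrite -expr2 sqr_ge0. Qed.

Lemma CS3 (x0 x1 x2 y0 y1 y2 : R) :
  (x0 * y0 + x1 * y1 + x2 * y2) ^+ 2 <=
  (x0 * x0 + x1 * x1 + x2 * x2) * (y0 * y0 + y1 * y1 + y2 * y2).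
Proof.
have h1 := sqr_ge0 (x0 * y1 - x1 * y0).
have h2 := sqr_ge0 (x0 * y2 - x2 * y0).
have h3 := sqr_ge0 (x1 * y2 - x2 * y1).
have e : (x0 * x0 + x1 * x1 + x2 * x2) * (y0 * y0 + y1 * y1 + y2 * y2)
  - (x0 * y0 + x1 * y1 + x2 * y2) ^+ 2 =
  (x0 * y1 - x1 * y0) ^+ 2 + (x0 * y2 - x2 * y0) ^+ 2 + (x1 * y2 - x2 * y1) ^+ 2
  by ring.
lra.
Qed.

Lemma dot_CS p q : dot3 p q ^+ 2 <= dot3 p p * dot3 q q.
Proof.
rewrite /dot3 !big_ord_recr !big_ord0 /= !add0r.
exact: CS3.
Qed.

Lemma energy_ge0 p : 0 <= energy p.
Proof. exact: sqrtr_ge0. Qed.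

Lemma energy_sq p : energy p ^+ 2 = 1 + dot3 p p.
Proof. by rewrite sqr_sqrtr // addr_ge0 ?dot_ge0. Qed.

Lemma energy_ge1 p : 1 <= energy p.
Proof.
have := energy_sq p; have := dot_ge0 p; have := energy_ge0 p; nra.
Qed.

Definition cc p p' := energy p * energy p' - dot3 p p'.

Lemma keyR (a b S T d : R) : 0 <= a -> 0 <= b -> a ^+ 2 = 1 + S ->
  b ^+ 2 = 1 + T -> 0 <= S -> 0 <= T -> d ^+ 2 <= S * T ->
  (1 <= a * b - d) /\ (a ^+ 2 + b ^+ 2 - 2 * a * b * (a * b - d) + (a * b - d) ^+ 2 - 1 <= 0).
Proof.
move=> a0 b0 ha hb hS hT hcs.
have a1 : 1 <= a by nra.
have b1 : 1 <= b by nra.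
split; last by nra.
have hab : 1 <= a * b by nra.
have : d ^+ 2 <= (a * b - 1) ^+ 2.
  have := sqr_ge0 (a - b); nra.
move=> h; nra.
Qed.

Lemma key p p' : (1 <= cc p p') /\ (energy p ^+ 2 + energy p' ^+ 2 - 2 * energy p * energy p' * cc p p'
   + cc p p' ^+ 2 - 1 <= 0).
Proof.
rewrite /cc; exact: (keyR (energy_ge0 p) (energy_ge0 p') (energy_sq p) (energy_sq p')
  (dot_ge0 p) (dot_ge0 p') (dot_CS p p')).
Qed.

Lemma bound3 (a b c : R) : 1 <= a -> 1 <= b -> 1 <= c -> c < 3/2 ->
  a ^+ 2 + b ^+ 2 - 2 * a * b * c + c ^+ 2 - 1 <= 0 -> a <= 3 * b.
Proof.
move=> a1 b1 c1 c2 h; rewrite leNgt; apply/negP => hlt.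
have : a * b * c <= a * b * (3/2) by nra.
nra.
Qed.

Lemma bound2 (a b c : R) : 1 <= a -> 1 <= b -> 1 <= c -> c <= 9/8 ->
  a ^+ 2 + b ^+ 2 - 2 * a * b * c + c ^+ 2 - 1 <= 0 -> a <= 2 * b.
Proof.
move=> a1 b1 c1 c2 h; rewrite leNgt; apply/negP => hlt.
have : a * b * c <= a * b * (9/8) by nra.
have : 0 < (a - 2 * b) * (a - b / 4) by apply: mulr_gt0; lra.
nra.
Qed.

Lemma ccC p p' : cc p p' = cc p' p.
Proof. by rewrite /cc dotC mulrC. Qed.

Lemma cc_cons p q p' q' : conserved p q p' q' -> cc q q' = cc p p'.
Proof.
case=> hE hv.
have hq' : q' = p + q - p' by rewrite hv addrC addKr.
have hEq' : energy q' = energy p + energy q - energy p' by lra.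
have hm := energy_sq q'.
have hd1 : dot3 q' q' = dot3 (p + q - p') (p + q - p') by rewrite hq'.
have hd2 : dot3 q q' = dot3 q (p + q - p') by rewrite hq'.
rewrite hEq' hd1 in hm.
rewrite /cc hEq' hd2.
rewrite !(dotDl, dotBl, dotDr, dotBr, dotNl, dotNr) in hm *.
have := energy_sq p; have := energy_sq q; have := energy_sq p'.
rewrite ?(dotC q p) ?(dotC p' p) ?(dotC p' q) in hm *.
lra.
Qed.

Lemma gbar_cc p' p : gbar p' p ^+ 2 = Num.sqrt (2 * (cc p' p - 1)) ^+ 2.
Proof. by rewrite /gbar /mink /cc; congr (_ ^+ 2); congr (Num.sqrt (2 * _)); lra. Qed.

Lemma gbar_lt (p' p : 'rV[R]_3) (t : R) : 0 <= t -> gbar p' p <= t ->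
  2 * (cc p' p - 1) <= t ^+ 2.
Proof.
move=> t0 h.
case: (lerP (2 * (cc p' p - 1)) 0) => hx; first by have := sqr_ge0 t; lra.
have hg : gbar p' p = Num.sqrt (2 * (cc p' p - 1)).
  by rewrite /gbar /mink /cc; congr (Num.sqrt (2 * _)); lra.
rewrite -[X in X <= _](sqr_sqrtr (ltW hx)) -hg.
have := sqrtr_ge0 (2 * (- mink p' p - 1)); rewrite -/(gbar p' p) => g0.
nra.
Qed.

End Aux.

Theorem lemma3p5 (R : realType) :
  (exists C : R, 0 < C /\
    forall p q p' q' : 'rV[R]_3,
      conserved p q p' q' -> gbar p' p < 1 ->
      [/\ energy q' <= C * energy q, energy q <= C * energy q',
          energy p' <= C * energy p & energy p <= C * energy p'])
  /\
  (forall (p q p' q' : 'rV[R]_3) (k : nat),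
      (0 < k)%N -> conserved p q p' q' ->
      (2 : R) ^- k.+1 <= gbar p' p <= (2 : R) ^- k ->
      energy p <= Num.sqrt 5 * energy p' /\ energy p' <= Num.sqrt 5 * energy p).
Proof.
split.
  exists 3; split; first lra.
  move=> p q p' q' hc hg.
  have hc1 : cc p p' < 3/2.
    case: (lerP (2 * (cc p' p - 1)) 0) => hx; first by rewrite ccC; lra.
    have hgs : gbar p' p = Num.sqrt (2 * (cc p' p - 1)).
      by rewrite /gbar /mink /cc; congr (Num.sqrt (2 * _)); lra.
    have g0 : 0 <= gbar p' p by exact: sqrtr_ge0.
    have := sqr_sqrtr (ltW hx); rewrite -hgs => e.
    rewrite ccC; nra.
  have hq := cc_cons hc.
  have [c1 Q] := key p p'.
  have [c1' Q'] := key q q'.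
  rewrite hq in c1' Q'.
  have ep := energy_ge1 p; have ep' := energy_ge1 p'.
  have eq := energy_ge1 q; have eq' := energy_ge1 q'.
  split.
  - apply: (bound3 eq' eq c1 hc1); nra.
  - exact: (bound3 eq eq' c1 hc1).
  - apply: (bound3 ep' ep c1 hc1); nra.
  - exact: (bound3 ep ep' c1 hc1).
move=> p q p' q' k k0 hc /andP[_ hk].
have hk2 : (2 : R) ^- k <= 1/2.
  have h2 : (2 : R) <= 2 ^+ k.
    case: k k0 hk => // k _ _; rewrite exprS.
    have : (1 : R) <= 2 ^+ k by apply: exprn_ege1; lra.
    lra.
  have y0 : (0 : R) < 2 ^+ k by lra.
  have e : (2 : R) ^- k * 2 ^+ k = 1 by rewrite mulVf // gt_eqF.
  have : (0 : R) < 2 ^- k by rewrite invr_gt0.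
  nra.
have t0 : (0 : R) <= 2 ^- k by rewrite invr_ge0 exprn_ge0.
have := gbar_lt t0 hk => hx.
have h2 : cc p p' <= 9/8.
  rewrite ccC; have : (2 : R) ^- k ^+ 2 <= 1/4.
    have := t0; nra.
  lra.
have [c1 Q] := key p p'.
have ep := energy_ge1 p; have ep' := energy_ge1 p'.
have s5 : 2 <= Num.sqrt (5 : R).
  have := @sqr_sqrtr R 5 ltac:(lra); have := @sqrtr_ge0 R 5; nra.
split.
- have := bound2 ep ep' c1 h2 Q; nra.
- have := bound2 ep' ep c1 h2; nra.
Qed.
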